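(* Let $S[1..n]$ be a string over $\Sigma=\{1,\ldots,\sigma\}$, and suppose its rank array and lcp array are given. Then for any position interval $[x..y]$ with $1\le x\le y\le n$, one can find $\mathrm{LR}_x^y$ or determine that it does not exist using $O(x)$ time and $O(n)$ space. If there are multiple choices for $\mathrm{LR}_x^y$, the leftmost one is returned.
   Context: For $1\le i\le j\le n$, $S[i..j]=S[i]\cdots S[j]$. A substring $S[i..j]$ covers $[x..y]$ if $i\le x\le y\le j$. A substring is unique if it has no other occurrence starting at a different position; it is a repeat otherwise. $\mathrm{LR}_x^y$ is a repeat $S[i..j]$ covering $[x..y]$ such that no repeat $S[i'..j']$ covering $[x..y]$ has $j'-i'>j-i$. The suffix array $SA[1..n]$ is the permutation of $\{1,\ldots,n\}$ such that $S[SA[1]..n]<S[SA[2]..n]<\cdots$ in lexicographic order (a proper prefix is smaller). The rank array is its inverse: $\mathrm{Rank}[i]=j$ iff $SA[j]=i$. The lcp array $\mathrm{LCP}[1..n+1]$ has $\mathrm{LCP}[1]=\mathrm{LCP}[n+1]=0$ and, for $2\le i\le n$, $\mathrm{LCP}[i]$ is the length of the longest common prefix of $S[SA[i-1]..n]$ and $S[SA[i]..n]$. Complexity is in the word-RAM model with each integer in $\{0,\ldots,n+1\}$ occupying a constant number of words. *)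

(* Defs.v *)
From mathcomp Require Import all_boot.
Set Implicit Arguments. Unset Strict Implicit. Unset Printing Implicit Defensive.

Definition chr (S : seq nat) (i : nat) : nat := nth 0 S i.-1.

Definition substr (S : seq nat) (i j : nat) : seq nat := take (j.+1 - i) (drop i.-1 S).

Definition suffix (S : seq nat) (i : nat) : seq nat := drop i.-1 S.

Definition is_string (sigma n : nat) (S : seq nat) : Prop :=
  1 <= n /\ size S = n /\ all (fun a => (1 <= a) && (a <= sigma)) S.

Definition occurs_at (S : seq nat) (i j i' : nat) : Prop :=
  1 <= i' /\ i' + (j - i) <= size S /\ substr S i' (i' + (j - i)) = substr S i j.

Definition is_repeat (S : seq nat) (i j : nat) : Prop :=
  1 <= i /\ i <= j /\ j <= size S /\ exists i', i' <> i /\ occurs_at S i j i'.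

Definition covers (i j x y : nat) : Prop := i <= x /\ x <= y /\ y <= j.

Definition is_LR (S : seq nat) (x y i j : nat) : Prop :=
  is_repeat S i j /\ covers i j x y /\
  forall i' j', is_repeat S i' j' -> covers i' j' x y -> j' - i' <= j - i.

Definition is_leftmost_LR (S : seq nat) (x y i j : nat) : Prop :=
  is_LR S x y i j /\ forall i' j', is_LR S x y i' j' -> i <= i'.

Fixpoint lexlt (u v : seq nat) : bool :=
  match u, v with
  | _, [::] => false
  | [::], _ :: _ => true
  | a :: u', b :: v' => (a < b) || ((a == b) && lexlt u' v')
  end.

Fixpoint lcp (u v : seq nat) : nat :=
  match u, v with
  | a :: u', b :: v' => if a == b then (lcp u' v').+1 else 0
  | _, _ => 0
  end.

Definition is_suffix_array (S : seq nat) (SA : seq nat) : Prop :=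
  perm_eq SA (iota 1 (size S)) /\ sorted lexlt (map (suffix S) SA).

Definition SAat (SA : seq nat) (k : nat) : nat := nth 0 SA k.-1.

Definition rank_of (SA : seq nat) (i : nat) : nat := (index i SA).+1.

Definition lcp_of (S SA : seq nat) (k : nat) : nat :=
  if (2 <= k) && (k <= size S)
  then lcp (suffix S (SAat SA k.-1)) (suffix S (SAat SA k))
  else 0.

(* Memory cells indexed by nat, holding nat; every instruction costs one unit
   of time. Space = range of addresses touched; the word size is enforced by
   bounding every stored value by a polynomial in n (word size O(log n)). *)

Inductive instr : Type :=
  | IConst of nat & nat
  | IAdd of nat & nat & nat
  | ISub of nat & nat & nat      (* M[a] := M[b] - M[c] (truncated) *)
  | IMul of nat & nat & nat
  | IDiv of nat & nat & nat      (* M[a] := M[b] / M[c] (0 if M[c] = 0) *)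
  | ILoad of nat & nat
  | IStore of nat & nat
  | IJlt of nat & nat & nat
  | IHalt.

Definition program := seq instr.

Record state := State { pc : nat; memory : nat -> nat }.

Definition upd (m : nat -> nat) (a v : nat) : nat -> nat :=
  fun b => if b == a then v else m b.

Definition fetch (P : program) (s : state) : instr := nth IHalt P (pc s).

Definition halted (P : program) (s : state) : bool :=
  if fetch P s is IHalt then true else false.

Definition step (P : program) (s : state) : state :=
  let m := memory s in
  let nxt := (pc s).+1 in
  match fetch P s with
  | IConst a k => State nxt (upd m a k)
  | IAdd a b c => State nxt (upd m a (m b + m c))
  | ISub a b c => State nxt (upd m a (m b - m c))
  | IMul a b c => State nxt (upd m a (m b * m c))
  | IDiv a b c => State nxt (upd m a (m b %/ m c))
  | ILoad a b => State nxt (upd m a (m (m b)))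
  | IStore a b => State nxt (upd m (m a) (m b))
  | IJlt a b l => State (if m a < m b then l else nxt) m
  | IHalt => s
  end.

Definition touched (P : program) (s : state) : seq nat :=
  let m := memory s in
  match fetch P s with
  | IConst a _ => [:: a]
  | IAdd a b c | ISub a b c | IMul a b c | IDiv a b c => [:: a; b; c]
  | ILoad a b => [:: a; b; m b]
  | IStore a b => [:: a; m a; b]
  | IJlt a b _ => [:: a; b]
  | IHalt => [::]
  end.

Definition run (P : program) (t : nat) (s : state) : state := iter t (step P) s.

Definition runs_within (P : program) (s : state) (T A W : nat) : Prop :=
  halted P (run P T s) /\
  (forall t, t < T -> ~~ halted P (run P t s)) /\
  (forall t, t < T -> all (fun a => a < A) (touched P (run P t s))) /\
  (forall t, t <= T -> forall a, memory (run P t s) a <= W).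

(* Input layout: M[0] = n, M[1] = x, M[2] = y,
   M[2+i] = Rank[i] (1 <= i <= n), M[n+2+i] = LCP[i] (1 <= i <= n+1), 0 elsewhere. *)
Definition input_mem (n x y : nat) (Rank LCP : nat -> nat) : nat -> nat :=
  fun a =>
    if a == 0 then n else if a == 1 then x else if a == 2 then y
    else if a <= n.+2 then Rank (a - 2)
    else if a <= (n.+1).*2.+1 then LCP (a - n.+2)
    else 0.

Definition correct_output (S : seq nat) (x y : nat) (m : nat -> nat) : Prop :=
  (m 0 = 0 /\ ~ (exists i j, is_LR S x y i j)) \/
  (m 0 = 1 /\ is_leftmost_LR S x y (m 1) (m 2)).

(* Main.v *)
Require Import Defs.
From mathcomp Require Import all_boot zify.
From Stdlib Require Import FunctionalExtensionality.
Set Implicit Arguments. Unset Strict Implicit. Unset Printing Implicit Defensive.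

Lemma lcpC u v : lcp u v = lcp v u.
Proof. elim: u v => [|a u IH] [|b v] //=; rewrite eq_sym IH; by case: (b == a). Qed.

Lemma lcp_size u v : lcp u v <= size u.
Proof. elim: u v => [|a u IH] [|b v] //=; case: (a == b) => //; exact: IH. Qed.

Lemma lcp_geP k u v : (k <= lcp u v) <-> (k <= size u /\ k <= size v /\ take k u = take k v).
Proof.
elim: k u v => [|k IH] [|a u] [|b v] /=; try (split; [done| by case=> ? []]).
case: eqP => [->|ne] /=.
  rewrite ltnS IH !ltnS; split; first by case=> ? [? ->].
  by case=> ? [?] [->].
split=> //; by case=> _ [_] [].
Qed.

Lemma lexlt_trans : transitive lexlt.
Proof.
move=> v u w; elim: u v w => [|a u IH] [|b v] [|c w] //=.
move=> /orP [ab|/andP [/eqP <- uv]] /orP [bc|/andP [/eqP <- vw]].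
- by rewrite (ltn_trans ab bc).
- by rewrite ab.
- by rewrite bc.
- by rewrite eqxx (IH _ _ uv vw) orbT.
Qed.

Lemma lexlt_irr u : lexlt u u = false.
Proof. by elim: u => //= a u ->; rewrite ltnn andbF. Qed.

Lemma lcp_mid u v w : lexlt u v -> lexlt v w -> lcp u w <= minn (lcp u v) (lcp v w).
Proof.
elim: u v w => [|a u IH] [|b v] [|c w] //= H1 H2.
case: eqP => [ac|] //=; subst c.
move: H1 H2 => /orP [ab|/andP [/eqP ab uv]] /orP [bc|/andP [/eqP bc vw]].
- by move: (ltn_trans ab bc); rewrite ltnn.
- by move: ab; rewrite bc ltnn.
- by move: bc; rewrite ab ltnn.
subst b; rewrite eqxx minnSS ltnS; exact: IH.
Qed.

Section SA.
Variables (S SA : seq nat).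
Hypothesis hsa : is_suffix_array S SA.
Let n := size S.

Lemma SA_mem i : (i \in SA) = (1 <= i <= n).
Proof. case: hsa => /perm_mem -> _; rewrite mem_iota; lia. Qed.

Lemma SA_size : size SA = n.
Proof. by case: hsa => /perm_size ->; rewrite size_iota. Qed.

Lemma SA_uniq : uniq SA.
Proof. by case: hsa => /perm_uniq ->; rewrite iota_uniq. Qed.

Definition sf p := Defs.suffix S (nth 0 SA p).

Lemma sf_lt p q : p < q -> q < n -> lexlt (sf p) (sf q).
Proof.
move=> pq qn; case: hsa => _ srt.
have := sorted_ltn_nth lexlt_trans [::] srt.
rewrite size_map SA_size => /(_ p q); rewrite !inE.
rewrite /sf -!(nth_map 0 [::] (Defs.suffix S)) ?SA_size; [|lia|lia].
apply; lia.
Qed.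

Lemma lcp_of_rank p : lcp_of S SA p.+1 = if 0 < p < n then lcp (sf p.-1) (sf p) else 0.
Proof.
rewrite /lcp_of /SAat /sf /=.
case: p => [|p] //=. 
Qed.

Definition Lval i := maxn (lcp_of S SA (rank_of SA i)) (lcp_of S SA (rank_of SA i).+1).

Lemma nth_index_SA i : i \in SA -> nth 0 SA (index i SA) = i.
Proof. exact: nth_index. Qed.

Lemma Lval_ub i i' : i \in SA -> i' \in SA -> i' <> i ->
  lcp (Defs.suffix S i) (Defs.suffix S i') <= Lval i.
Proof.
move=> hi hi' ne.
have pn : index i SA < n by rewrite -SA_size index_mem.
have qn : index i' SA < n by rewrite -SA_size index_mem.
have pq : index i SA != index i' SA.
  apply/negP => /eqP e; apply: ne.
  by rewrite -(nth_index_SA hi') -e nth_index_SA.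
set p := index i SA in pn pq *; set q := index i' SA in qn pq *.
have ei : Defs.suffix S i = sf p by rewrite /sf nth_index_SA.
have ei' : Defs.suffix S i' = sf q by rewrite /sf nth_index_SA.
rewrite /Lval /rank_of -/p lcp_of_rank ei ei'.
case: (ltngtP q p) pq => // [qp|pq'] _.
- rewrite (_ : 0 < p < n) ?(lcpC (sf p)) /=; last lia.
  apply: leq_trans (leq_maxl _ _).
  case: (ltngtP q p.-1) => [qp1|qp1|->] //; last lia.
  have h1 : p.-1 < n by lia.
  have h2 : p.-1 < p by lia.
  have := lcp_mid (sf_lt qp1 h1) (sf_lt h2 pn).
  move/leq_trans; apply; exact: geq_minr.
- rewrite lcp_of_rank (_ : (0 < p.+1 < n) = true) /=; last lia.
  apply: leq_trans (leq_maxr _ _).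
  case: (ltngtP q p.+1) => [qp1|qp1|->] //; first lia.
  have h1 : p.+1 < n by lia.
  have := lcp_mid (sf_lt (ltnSn p) h1) (sf_lt qp1 qn).
  move/leq_trans; apply; exact: geq_minl.
Qed.

Lemma Lval_lb i k : i \in SA -> 0 < k <= Lval i ->
  exists i', [/\ i' \in SA, i' <> i & k <= lcp (Defs.suffix S i) (Defs.suffix S i')].
Proof.
move=> hi /andP [k0 kL].
have pn : index i SA < n by rewrite -SA_size index_mem.
set p := index i SA in pn *.
have ei : Defs.suffix S i = sf p by rewrite /sf nth_index_SA.
have mem q : q < n -> nth 0 SA q \in SA by move=> qn; rewrite mem_nth // SA_size.
have neq q : q < n -> q != p -> nth 0 SA q <> i.
  move=> qn qp e; move/eqP: qp; apply.
  by rewrite /p -e index_uniq // ?SA_uniq ?SA_size.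
move: kL; rewrite /Lval /rank_of -/p lcp_of_rank lcp_of_rank /= leq_max.
case/orP.
- case: ifP => [/andP [p0 _]|]; last by move=> _; rewrite leqNgt k0.
  move=> h; exists (nth 0 SA p.-1); split.
  + apply: mem; lia.
  + apply: neq; lia.
  + by rewrite ei lcpC.
- case: ifP => [pn1|]; last by move=> _; rewrite leqNgt k0.
  move=> h; exists (nth 0 SA p.+1); split.
  + exact: mem.
  + apply: neq; lia.
  + by rewrite ei.
Qed.

End SA.

Lemma size_suffix S i : size (Defs.suffix S i) = size S - i.-1.
Proof. by rewrite /Defs.suffix size_drop. Qed.

Lemma repeat_iff S SA i j : is_suffix_array S SA ->
  is_repeat S i j <-> [/\ 1 <= i, i <= j, j <= size S & j - i < Lval S SA i].
Proof.
move=> hsa.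
have subE a d : substr S a (a + d) = take d.+1 (Defs.suffix S a).
  by rewrite /substr /Defs.suffix; congr take; lia.
split.
- case=> i1 [ij [jn [i' [ne [i'1 [i'n e]]]]]].
  split=> //.
  have hi : i \in SA by rewrite (SA_mem hsa); lia.
  have hi' : i' \in SA by rewrite (SA_mem hsa); lia.
  have := Lval_ub hsa hi hi' ne; apply: leq_trans.
  apply/lcp_geP; rewrite !size_suffix; split; first lia.
  split; first lia.
  move: e; rewrite subE (_ : j = i + (j - i)); last lia.
  by rewrite subE (_ : i + (j - i) - i = j - i) //; lia.
- case=> i1 ij jn lt.
  have hi : i \in SA by rewrite (SA_mem hsa); lia.
  have [i' [hi' ne]] := Lval_lb hsa (k := (j - i).+1) hi ltac:(lia).
  move/lcp_geP; rewrite !size_suffix => -[h1 [h2 h3]].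
  move: hi'; rewrite (SA_mem hsa) => hi'.
  split=> //; split=> //; split=> //; exists i'; split=> //.
  split; first lia. split; first lia.
  rewrite subE -h3 (_ : j = i + (j - i)); last lia.
  by rewrite subE (_ : i + (j - i) - i = j - i) //; lia.
Qed.

Lemma Lval_le S SA i : is_suffix_array S SA -> i \in SA -> Lval S SA i <= size S - i.-1.
Proof.
move=> hsa hi.
have pn : index i SA < size S by rewrite -(SA_size hsa) index_mem.
set p := index i SA in pn.
have ei : sf S SA p = Defs.suffix S i by rewrite /sf nth_index.
rewrite /Lval /rank_of -/p !lcp_of_rank -size_suffix -ei geq_max; apply/andP; split.
- case: ifP => // _; rewrite lcpC; exact: lcp_size.
- case: ifP => // _; exact: lcp_size.
Qed.

Section Spec.
Variables (S SA : seq nat) (x y : nat).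
Hypothesis hsa : is_suffix_array S SA.
Hypotheses (x1 : 1 <= x) (xy : x <= y) (yn : y <= size S).
Local Notation L := (Lval S SA).

Definition Inv k best bi :=
  [/\ bi <= k,
   (forall i', 1 <= i' <= k -> y < i' + L i' -> L i' <= best) &
   (0 < best -> [/\ 1 <= bi, y < bi + L bi, L bi = best &
      forall i', 1 <= i' < bi -> y < i' + L i' -> L i' < best])].

Lemma Inv0 : Inv 0 0 0.
Proof. split=> // i'; lia. Qed.

Lemma divnn_lt d : d %/ d = (0 < d).
Proof. by case: d => // d; rewrite divnn. Qed.

Lemma Inv_step k best bi : Inv k best bi ->
  let i := k.+1 in
  let c := ((i + L i - y) %/ (i + L i - y)) * ((L i - best) %/ (L i - best)) in
  Inv i (best + (L i - best) * c) (bi + (i - bi) * c).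
Proof.
case=> bk h1 h2 /=; rewrite !divnn_lt.
set Lk := L k.+1.
case: (ltnP y (k.+1 + Lk)) => cy; case: (ltnP best Lk) => cb.
- have -> : 0 < k.+1 + Lk - y by lia.
  have -> : 0 < Lk - best by lia.
  rewrite !muln1.
  have -> : bi + (k.+1 - bi) = k.+1 by lia.
  split; first lia.
  + move=> i' hi' ci'; case: (ltnP i' k.+1) => ik.
    * have := h1 i' ltac:(lia) ci'; lia.
    * have e : i' = k.+1 by lia.
      subst i'; rewrite -/Lk; lia.
  + move=> _; split; rewrite -?/Lk; try lia.
    move=> i' hi' ci'; have := h1 i' ltac:(lia) ci'; lia.
- have -> : 0 < Lk - best = false by lia.
  rewrite !muln0 !addn0; split; first lia.
  + move=> i' hi' ci'; case: (ltnP i' k.+1) => ik.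
    * apply: h1 => //; lia.
    * have e : i' = k.+1 by lia.
      subst i'; rewrite -/Lk; lia.
  + done.
- have -> : 0 < k.+1 + Lk - y = false by lia.
  rewrite !muln0 !addn0; split; first lia.
  + move=> i' hi' ci'; case: (ltnP i' k.+1) => ik.
    * apply: h1 => //; lia.
    * have e : i' = k.+1 by lia.
      subst i'; rewrite -/Lk in ci'; lia.
  + done.
- have -> : 0 < k.+1 + Lk - y = false by lia.
  rewrite !muln0 !addn0; split; first lia.
  + move=> i' hi' ci'; case: (ltnP i' k.+1) => ik.
    * apply: h1 => //; lia.
    * have e : i' = k.+1 by lia.
      subst i'; rewrite -/Lk in ci'; lia.
  + done.
Qed.

Lemma Inv_correct best bi (m : nat -> nat) : Inv x best bi ->
  m 0 = best %/ best -> m 1 = bi -> m 2 = bi + best - 1 ->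
  correct_output S x y m.
Proof.
case=> bk h1 h2 e0 e1 e2; rewrite /correct_output e0 e1 e2 divnn_lt.
case: (posnP best) => [b0|bp].
- left; split=> // -[i [j [rep [cov _]]]].
  move: rep; rewrite (repeat_iff _ _ hsa) => -[i1 ij jn lt].
  case: cov => ix [_ yj].
  have := h1 i ltac:(lia) ltac:(lia); lia.
- right; split=> //.
  have [b1 cb Lb hl] := h2 bp.
  have hbi : bi \in SA by rewrite (SA_mem hsa); lia.
  have Lle := Lval_le hsa hbi.
  have LR : is_LR S x y bi (bi + best - 1).
    split; last split.
    + rewrite (repeat_iff _ _ hsa); split; lia.
    + split; lia.
    + move=> i' j' /(repeat_iff _ _ hsa) [i1 ij jn lt] [ix [_ yj]].
      have := h1 i' ltac:(lia) ltac:(lia); lia.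
  split=> // i' j' [/(repeat_iff _ _ hsa) [i1 ij jn lt] [[ix [_ yj]] mx]].
  have := mx _ _ (proj1 LR) (proj1 (proj2 LR)) => mx'.
  case: (ltnP i' bi) => // ib.
  have := hl i' ltac:(lia) ltac:(lia); lia.
Qed.
End Spec.


Definition M (H : nat -> nat) (r : seq nat) : nat -> nat :=
  fun a => if a < size r then nth 0 r a else H a.

Definition okst P A W s :=
  [/\ ~~ halted P s, all (fun a => a < A) (touched P s) & forall a, memory s a <= W].

Definition seg P A W s k s' :=
  run P k s = s' /\ forall t, t < k -> okst P A W (run P t s).

Lemma seg0 P A W s s' : s = s' -> seg P A W s 0 s'.
Proof. by move=> ->; split. Qed.

Lemma seg_cons P A W s k s' : okst P A W s -> seg P A W (step P s) k s' -> seg P A W s k.+1 s'.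
Proof.
move=> ok [e h]; split; first by rewrite /run iterSr.
case=> [|t] lt //; rewrite /run iterSr; exact: h.
Qed.

Lemma seg_trans P A W s k1 s1 k2 s2 :
  seg P A W s k1 s1 -> seg P A W s1 k2 s2 -> seg P A W s (k1 + k2) s2.
Proof.
move=> [e1 h1] [e2 h2]; split.
  by rewrite /run addnC iterD -/(run P k1 s) e1.
move=> t lt; case: (ltnP t k1) => tk; first exact: h1.
have := h2 (t - k1) ltac:(lia).
by rewrite -e1 /run -iterD subnK.
Qed.

Lemma seg_runs P A W s T s' : seg P A W s T s' -> halted P s' -> (forall a, memory s' a <= W) ->
  runs_within P s T A W.
Proof.
move=> [e h] hs hm; split; first by rewrite e.
split; first by move=> t /h [].
split; first by move=> t /h [].
move=> t; rewrite leq_eqVlt => /orP [/eqP ->|/h []//]; by rewrite e.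
Qed.

Definition astep (P : program) H pc r : nat * seq nat :=
  match nth IHalt P pc with
  | IConst a k => (pc.+1, set_nth 0 r a k)
  | IAdd a b c => (pc.+1, set_nth 0 r a (nth 0 r b + nth 0 r c))
  | ISub a b c => (pc.+1, set_nth 0 r a (nth 0 r b - nth 0 r c))
  | IMul a b c => (pc.+1, set_nth 0 r a (nth 0 r b * nth 0 r c))
  | IDiv a b c => (pc.+1, set_nth 0 r a (nth 0 r b %/ nth 0 r c))
  | ILoad a b => (pc.+1, set_nth 0 r a (M H r (nth 0 r b)))
  | IJlt a b l => (if nth 0 r a < nth 0 r b then l else pc.+1, r)
  | _ => (pc, r)
  end.

Definition regs_ok (i : instr) sz :=
  match i with
  | IConst a _ => a < sz
  | IAdd a b c | ISub a b c | IMul a b c | IDiv a b c => [&& a < sz, b < sz & c < sz]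
  | ILoad a b | IJlt a b _ => (a < sz) && (b < sz)
  | _ => false
  end.

Definition ld_ok (i : instr) r A :=
  if i is ILoad _ b then nth 0 r b < A else true.

Lemma M_lt H r a : a < size r -> M H r a = nth 0 r a.
Proof. by rewrite /M => ->. Qed.

Lemma upd_M H r a v : a < size r -> upd (M H r) a v = M H (set_nth 0 r a v).
Proof.
move=> ar; apply: functional_extensionality => b.
rewrite /upd /M size_set_nth nth_set_nth /= (maxn_idPr ar).
case: eqP => [->|_] //; by rewrite ar.
Qed.

Lemma upd_M_hi H r a v : size r <= a -> upd (M H r) a v = M (upd H a v) r.
Proof.
move=> ar; apply: functional_extensionality => b.
rewrite /upd /M; case: eqP => [->|_] //; by rewrite ltnNge ar.
Qed.

Lemma M_le H r W a : all (fun v => v <= W) r -> (forall a, H a <= W) -> M H r a <= W.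
Proof.
move=> /allP hr hH; rewrite /M; case: ltnP => h //.
by apply: hr; rewrite mem_nth.
Qed.

Lemma step_astep P H pc r : regs_ok (nth IHalt P pc) (size r) ->
  step P (State pc (M H r)) = State (astep P H pc r).1 (M H (astep P H pc r).2).
Proof.
rewrite /step /fetch /astep /=.
case: (nth IHalt P pc) => //=.
- by move=> a k ha; rewrite upd_M.
- by move=> a b c /and3P [ha hb hc]; rewrite !M_lt // upd_M.
- by move=> a b c /and3P [ha hb hc]; rewrite !M_lt // upd_M.
- by move=> a b c /and3P [ha hb hc]; rewrite !M_lt // upd_M.
- by move=> a b c /and3P [ha hb hc]; rewrite !M_lt // upd_M.
- by move=> a b /andP [ha hb]; rewrite (M_lt H hb) upd_M.
- by move=> a b l /andP [ha hb]; rewrite !M_lt.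
Qed.

Lemma seg_astep P A W H pc r k s' :
  regs_ok (nth IHalt P pc) (size r) -> size r <= A -> ld_ok (nth IHalt P pc) r A ->
  all (fun v => v <= W) r -> (forall a, H a <= W) ->
  seg P A W (State (astep P H pc r).1 (M H (astep P H pc r).2)) k s' ->
  seg P A W (State pc (M H r)) k.+1 s'.
Proof.
move=> hr hA hl hW hH hs; apply: seg_cons; last by rewrite step_astep.
split; last by move=> a; apply: M_le.
- by rewrite /halted /fetch /=; case: (nth IHalt P pc) hr.
- rewrite /touched /fetch /=.
  case: (nth IHalt P pc) hr hl => //= *;
  repeat match goal with H : is_true (_ && _) |- _ => case/andP: H => ? ? end;
  rewrite ?M_lt //; apply/and4P || apply/and3P || apply/andP; split => //; lia.
Qed.

Lemma seg_store P A W H pc r k s' a b :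
  nth IHalt P pc = IStore a b -> a < size r -> b < size r ->
  size r <= nth 0 r a -> nth 0 r a < A -> size r <= A ->
  all (fun v => v <= W) r -> (forall a, H a <= W) ->
  seg P A W (State pc.+1 (M (upd H (nth 0 r a) (nth 0 r b)) r)) k s' ->
  seg P A W (State pc (M H r)) k.+1 s'.
Proof.
move=> hi ha hb h1 h2 hA hW hH hs; apply: seg_cons.
  split; last by move=> c; apply: M_le.
  - by rewrite /halted /fetch /= hi.
  - rewrite /touched /fetch /= hi /= M_lt //; apply/and4P; split=> //; lia.
by rewrite /step /fetch /= hi /= !M_lt // upd_M_hi.
Qed.

Lemma upd_le H p v W : (forall a, H a <= W) -> v <= W -> forall a, upd H p v a <= W.
Proof. move=> h hv a; rewrite /upd; case: eqP => //. Qed.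

Lemma upd_ne H p v a : a != p -> upd H p v a = H a.
Proof. by rewrite /upd => /negbTE ->. Qed.

Lemma upd_eq H p v a : a = p -> upd H p v a = v.
Proof. by rewrite /upd => ->; rewrite eqxx. Qed.

Lemma addk1 B k : B + k + 1 = B + k.+1.
Proof. by rewrite addn1 addnS. Qed.

Lemma stateM_eq H r r' pc : r = r' -> State pc (M H r) = State pc (M H r').
Proof. by move=> ->. Qed.

Lemma M_self H r : (forall a, a < size r -> nth 0 r a = H a) -> M H r = H.
Proof. move=> h; apply: functional_extensionality => a; by rewrite /M; case: ltnP => // /h. Qed.

Ltac bnd := rewrite /=; repeat (apply/andP; split); lia.
Ltac st := apply: seg_astep; [done | rewrite /=; lia | (done || (rewrite /=; lia)) | bnd | done | rewrite /astep /=].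

Lemma le_lit k W : k <= 40 -> 40 <= W -> k <= W.
Proof. move=> h1 h2; exact: leq_trans h1 h2. Qed.

Lemma mulsub_le (s : bool) B W : B <= W -> (1 - s) * B <= W.
Proof. by case: s; rewrite ?mul0n ?mul1n. Qed.

Lemma mulsubD_le (s : bool) B a W : B + a <= W -> (1 - s) * B + a <= W.
Proof. by case: s; rewrite ?mul0n ?mul1n // add0n => /(leq_trans (leq_addl _ _)). Qed.

Definition prog : program := [::
  IMul 1 1 0;
  IAdd 1 1 2;
  IDiv 2 0 0;
  IAdd 0 0 0;
  IAdd 0 0 2;
  IAdd 0 0 2;
  IAdd 0 0 2;
  IAdd 0 0 2;
  IAdd 0 0 2;
  IAdd 0 0 2;
  IAdd 0 0 2;
  IAdd 0 0 2;
  IAdd 0 0 2;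
  IAdd 0 0 2;
  IAdd 0 0 2;
  IAdd 0 0 2;
  IAdd 0 0 2;
  IAdd 0 0 2;
  IAdd 0 0 2;
  IAdd 0 0 2;
  IAdd 0 0 2;
  IAdd 0 0 2;
  IAdd 0 0 2;
  IStore 0 3;
  IAdd 0 0 2;
  IStore 0 4;
  IAdd 0 0 2;
  IStore 0 5;
  IAdd 0 0 2;
  IStore 0 6;
  IAdd 0 0 2;
  IStore 0 7;
  IAdd 0 0 2;
  IStore 0 8;
  IAdd 0 0 2;
  IStore 0 9;
  IAdd 0 0 2;
  IStore 0 10;
  IAdd 0 0 2;
  IStore 0 11;
  IAdd 0 0 2;
  IStore 0 12;
  IAdd 0 0 2;
  IStore 0 13;
  IAdd 0 0 2;
  IStore 0 14;
  IAdd 0 0 2;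
  IStore 0 15;
  IConst 3 15;
  ISub 0 0 3;
  IConst 11 16;
  ISub 4 0 11;
  IConst 3 2;
  IDiv 4 4 3;
  ISub 5 1 2;
  IDiv 5 5 4;
  IMul 6 5 4;
  ISub 6 1 6;
  IAdd 7 4 2;
  IAdd 7 7 2;
  IConst 8 1;
  IConst 9 0;
  IConst 10 0;
  IJlt 5 8 101;
  IAdd 1 8 2;
  IAdd 1 1 2;
  IDiv 3 1 11;
  IDiv 3 3 3;
  ISub 3 2 3;
  IMul 3 3 0;
  IAdd 3 3 1;
  ILoad 3 3;
  IAdd 1 7 3;
  IDiv 12 1 11;
  IDiv 12 12 12;
  ISub 12 2 12;
  IMul 12 12 0;
  IAdd 12 12 1;
  ILoad 12 12;
  IAdd 1 1 2;
  IDiv 13 1 11;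
  IDiv 13 13 13;
  ISub 13 2 13;
  IMul 13 13 0;
  IAdd 13 13 1;
  ILoad 13 13;
  ISub 13 13 12;
  IAdd 12 12 13;
  IAdd 1 8 12;
  ISub 1 1 6;
  IDiv 1 1 1;
  ISub 3 12 9;
  IDiv 13 3 3;
  IMul 1 1 13;
  IMul 3 3 1;
  IAdd 9 9 3;
  ISub 3 8 10;
  IMul 3 3 1;
  IAdd 10 10 3;
  IAdd 8 8 2;
  IJlt 2 0 63;
  IDiv 0 9 9;
  ISub 14 14 14;
  IAdd 1 10 14;
  IAdd 3 10 9;
  ISub 2 3 2;
  IHalt].


Ltac bnd1 := first [assumption | (apply: le_lit; [done|assumption]) | (apply: mulsub_le; lia) | (apply: mulsubD_le; lia) | lia].
Ltac bnd' := rewrite /=; repeat (apply/andP; split); bnd1.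
Ltac hb := first [assumption | (apply: upd_le; [hb | lia])].
Ltac st' := apply: seg_astep; [done | rewrite /=; lia | (done || (rewrite /=; apply: mulsubD_le; lia) || (rewrite /=; lia)) | bnd' | hb | rewrite /astep /=].
Ltac sto := apply: seg_store; [done | done | done | rewrite /=; lia | rewrite /=; lia | rewrite /=; lia | bnd' | hb | rewrite /=].


Arguments divn : simpl never.
Arguments modn : simpl never.


Lemma read_eq n B H (inp : nat -> nat) r a : size r = 16 -> 3 <= a <= n.*2 + 3 -> B = n.*2 + 16 ->
  (forall a, 2 < a <= 15 -> H (B + a) = inp a) -> (forall a, a < n.*2 + 19 -> H a = inp a) ->
  M H r ((1 - (0 < a %/ 16)) * B + a) = inp a.
Proof.
move=> sr ha hB hs hl; rewrite /M sr.
case: (ltnP a 16) => a16.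
- rewrite divn_small //= mul1n ifF; last lia.
  rewrite hs //; lia.
- have -> : 0 < a %/ 16 by rewrite divn_gt0.
  rewrite subnn mul0n add0n ifF; last lia.
  apply: hl; lia.
Qed.

Definition LRg B n x y i best bi t1 t3 t12 t13 t14 t15 : seq nat :=
  [:: B; t1; 1; t3; n; x; y; n.+2; i; best; bi; 16; t12; t13; t14; t15].

Lemma body n x y (inp : nat -> nat) W A B H i best bi t1 t3 t12 t13 t14 t15 :
  0 < x -> x <= n -> y <= n -> n*n + n.*2 + 40 <= W -> 40 * n.+1 <= A -> B = n.*2 + 16 ->
  (forall a, inp a <= n) -> (forall j, 1 <= j <= n -> 1 <= inp (j + 1 + 1) <= n) ->
  (forall a, 2 < a <= 15 -> H (B + a) = inp a) -> (forall a, a < n.*2 + 19 -> H a = inp a) ->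
  (forall a, H a <= W) ->
  1 <= i <= x -> best <= n -> bi <= n ->
  t1 <= W -> t3 <= W -> t12 <= W -> t13 <= W -> t14 <= W -> t15 <= W ->
  let l1 := inp (n.+2 + inp (i + 1 + 1)) in
  let l2 := inp (n.+2 + inp (i + 1 + 1) + 1) in
  let L := l1 + (l2 - l1) in
  let c := (0 < i + L - y) * (0 < L - best) in
  exists t1' t3' t12' t13', [/\ t1' <= W, t3' <= W, t12' <= W, t13' <= W &
  seg prog A W (State 63 (M H (LRg B n x y i best bi t1 t3 t12 t13 t14 t15))) 38
    (State 63 (M H (LRg B n x y (i + 1) (best + (L - best) * c) (bi + (i - bi) * c) t1' t3' t12' t13' t14 t15)))].
Proof.
move=> x0 xn yn hW hA hB hi hR hHs hHl hHW hix hb hbi h1 h3 h12 h13 h14 h15 l1 l2 L c.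
have hW40 : 40 <= W by lia.
have hr := hR i ltac:(lia).
have hl1 := hi (n.+2 + inp (i + 1 + 1)).
have hl2 := hi (n.+2 + inp (i + 1 + 1) + 1).
do 4 eexists; split; last first.
rewrite /LRg.
st'.
rewrite ifF; last lia.
st'. st'.
st'. st'. rewrite divnn_lt. st'. st'. st'. st'.
rewrite (@read_eq n B H inp _ (i+1+1) _ _ hB hHs hHl); [|done|lia].
st'.
st'. st'. rewrite divnn_lt. st'. st'. st'. st'.
rewrite (@read_eq n B H inp _ (n.+2 + inp (i+1+1)) _ _ hB hHs hHl); [|done|lia].
st'.
st'. st'. rewrite divnn_lt. st'. st'. st'. st'.
rewrite (@read_eq n B H inp _ (n.+2 + inp (i+1+1) + 1) _ _ hB hHs hHl); [|done|lia].
st'. st'. st'. st'. st'. rewrite divnn_lt.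
st'. st'. rewrite divnn_lt.
do 8 st'. rewrite ifT; last lia.
apply: seg0; reflexivity.
all: lia.
Qed.

Lemma phase1 n x y (inp : nat -> nat) W A : 0 < x <= y -> y <= n -> n*n + n.*2 + 40 <= W -> 40 * n.+1 <= A -> x*n <= n*n ->
  inp 0 = n -> inp 1 = x -> inp 2 = y -> (forall a, inp a <= n) ->
  exists H, [/\ forall a, H a <= W, forall a, 3 <= a <= 15 -> H (n.*2 + 16 + a) = inp a,
                 forall a, a < n.*2 + 19 -> H a = inp a &
   seg prog A W (State 0 inp) 63 (State 63 (M H [:: n.*2+16; x*n+y; 1; 2; n; x; y; n.+2; 1; 0; 0; 16; inp 12; inp 13; inp 14; inp 15]))].
Proof.
move=> hxy hyn hW hA hxn i0 i1 i2 hi.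
have hi' : forall a, inp a <= W by move=> a; have := hi a; lia.
have n0 : 0 < n by lia.
have hW40 : 40 <= W by lia.
have hI3 : inp 3 <= W := hi' 3.
have hI4 : inp 4 <= W := hi' 4.
have hI5 : inp 5 <= W := hi' 5.
have hI6 : inp 6 <= W := hi' 6.
have hI7 : inp 7 <= W := hi' 7.
have hI8 : inp 8 <= W := hi' 8.
have hI9 : inp 9 <= W := hi' 9.
have hI10 : inp 10 <= W := hi' 10.
have hI11 : inp 11 <= W := hi' 11.
have hI12 : inp 12 <= W := hi' 12.
have hI13 : inp 13 <= W := hi' 13.
have hI14 : inp 14 <= W := hi' 14.
have hI15 : inp 15 <= W := hi' 15.
have [B hB] : exists B, B = n.*2 + 16 by eexists.
rewrite -hB.
eexists; split; last first.
rewrite -{1}(@M_self inp [:: n; x; y; inp 3; inp 4; inp 5; inp 6; inp 7; inp 8; inp 9; inp 10; inp 11; inp 12; inp 13; inp 14; inp 15]); last first.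
  by case=> [|[|[|[|[|[|[|[|[|[|[|[|[|[|[|[|a]]]]]]]]]]]]]]]].
st'. st'. st'.
rewrite (_ : n %/ n = 1); last by rewrite divnn n0.

have [D hD] : exists D, D = n.*2 by eexists.
st'. rewrite (_ : n + n = D); last lia.
do 16 (st'; rewrite ?addk1).
rewrite (_ : D + 16 = B); last lia.
st'; rewrite ?addk1.
st'; rewrite ?addk1.
st'; rewrite ?addk1.
sto.
st'; rewrite ?addk1. sto.
st'; rewrite ?addk1. sto.
st'; rewrite ?addk1. sto.
st'; rewrite ?addk1. sto.
st'; rewrite ?addk1. sto.
st'; rewrite ?addk1. sto.
st'; rewrite ?addk1. sto.
st'; rewrite ?addk1. sto.
st'; rewrite ?addk1. sto.
st'; rewrite ?addk1. sto.
st'; rewrite ?addk1. sto.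
st'; rewrite ?addk1. sto.
st'. st'. rewrite addnK. st'. st'. rewrite (_ : B - 16 = n.*2); last lia.
st'. st'. rewrite (_ : n.*2 %/ 2 = n); last by rewrite -muln2 mulnK.
st'. st'. rewrite (_ : (x * n + y - 1) %/ n = x); last first.
  rewrite -addnBA; last lia. rewrite divnMDl // divn_small ?addn0 //; lia.
st'. st'. rewrite (_ : x * n + y - x * n = y); last lia.
do 5 st'.
- by apply: seg0; apply: stateM_eq; rewrite !addn1.
- move=> a ha; do 13 (rewrite upd_ne; last (apply/eqP; lia)); done.
- move=> a /andP [h1 h2]; rewrite /upd !eqn_add2l; move: h1 h2.
  by case: a => [|[|[|[|[|[|[|[|[|[|[|[|[|[|[|[|a]]]]]]]]]]]]]]]].
- hb.
Qed.


Lemma loop n x y (inp : nat -> nat) W A B H t14 t15 (Q : nat -> nat -> nat -> Prop) :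
  0 < x -> x <= n -> y <= n -> n*n + n.*2 + 40 <= W -> 40 * n.+1 <= A -> B = n.*2 + 16 ->
  (forall a, inp a <= n) -> (forall j, 1 <= j <= n -> 1 <= inp (j + 1 + 1) <= n) ->
  (forall a, 2 < a <= 15 -> H (B + a) = inp a) -> (forall a, a < n.*2 + 19 -> H a = inp a) ->
  (forall a, H a <= W) -> t14 <= W -> t15 <= W ->
  (forall k best bi, k <= x -> Q k best bi -> best <= n /\ bi <= n) ->
  (forall k best bi, k < x -> Q k best bi ->
     let i := k.+1 in
     let l1 := inp (n.+2 + inp (i + 1 + 1)) in
     let l2 := inp (n.+2 + inp (i + 1 + 1) + 1) in
     let L := l1 + (l2 - l1) in
     let c := (0 < i + L - y) * (0 < L - best) in
     Q i (best + (L - best) * c) (bi + (i - bi) * c)) ->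
  forall k i best bi t1 t3 t12 t13, i + k = x + 1 -> 1 <= i -> Q i.-1 best bi ->
  t1 <= W -> t3 <= W -> t12 <= W -> t13 <= W ->
  exists best' bi' t1' t3' t12' t13', Q x best' bi' /\ (t1' <= W /\ t3' <= W /\ t12' <= W /\ t13' <= W) /\
    seg prog A W (State 63 (M H (LRg B n x y i best bi t1 t3 t12 t13 t14 t15))) (38 * k)
      (State 63 (M H (LRg B n x y (x + 1) best' bi' t1' t3' t12' t13' t14 t15))).
Proof.
move=> x0 xn yn hW hA hB hi hR hHs hHl hHW h14 h15 hQb hQs.
elim=> [|k IH] i best bi t1 t3 t12 t13 eik i1 hq h1 h3 h12 h13.
- have ei : i = x + 1 by lia.
  subst i; exists best, bi, t1, t3, t12, t13; split; last split.
  + by move: hq; rewrite addn1.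
  + done.
  + exact: seg0.
- have [hb hbi] := hQb i.-1 best bi ltac:(lia) hq.
  have := @body n x y inp W A B H i best bi t1 t3 t12 t13 t14 t15 x0 xn yn hW hA hB hi hR hHs hHl hHW
    ltac:(lia) hb hbi h1 h3 h12 h13 h14 h15.
  move=> /= [t1' [t3' [t12' [t13' [h1' h3' h12' h13' s1]]]]].
  have hq' := hQs i.-1 best bi ltac:(lia) hq.
  rewrite /= (prednK i1) in hq'.
  have [b' [bi' [u1 [u3 [u12 [u13 [hq2 [hu s2]]]]]]]] :=
    IH (i + 1) _ _ t1' t3' t12' t13' ltac:(lia) ltac:(lia) ltac:(rewrite addn1 /=; exact: hq') h1' h3' h12' h13'.
  exists b', bi', u1, u3, u12, u13; split=> //; split=> //.
  rewrite mulnS; exact: seg_trans s1 s2.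
Qed.

Lemma finish n x y W A B H best bi t1 t3 t12 t13 t14 t15 :
  0 < x -> x <= n -> y <= n -> n*n + n.*2 + 40 <= W -> 40 * n.+1 <= A -> B = n.*2 + 16 ->
  (forall a, H a <= W) -> best <= n -> bi <= n ->
  t1 <= W -> t3 <= W -> t12 <= W -> t13 <= W -> t14 <= W -> t15 <= W ->
  exists r, [/\ seg prog A W (State 63 (M H (LRg B n x y (x + 1) best bi t1 t3 t12 t13 t14 t15))) 6
      (State 106 (M H r)), size r = 16, nth 0 r 0 = best %/ best, nth 0 r 1 = bi &
      nth 0 r 2 = bi + best - 1 /\ all (fun v => v <= W) r].
Proof.
move=> x0 xn yn hW hA hB hHW hb hbi h1 h3 h12 h13 h14 h15.
have hW40 : 40 <= W by lia.
eexists; split.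
rewrite /LRg.
st'. rewrite ifT; last lia.
st'. rewrite divnn_lt.
do 4 st'.
apply: seg0; reflexivity.
all: rewrite /= ?divnn_lt ?subnn ?addn0 //.
split=> //; bnd'.
Qed.

Lemma inp_rank n x y R Lc j : 1 <= j <= n -> input_mem n x y R Lc (j + 1 + 1) = R j.
Proof.
move=> hj; rewrite /input_mem.
do 3 (case: eqP => [?|_]; first lia).
rewrite ifT; last lia. congr R; lia.
Qed.

Lemma inp_lcp n x y R Lc k : 1 <= k <= n.+1 -> input_mem n x y R Lc (n.+2 + k) = Lc k.
Proof.
move=> hk; rewrite /input_mem.
do 3 (case: eqP => [?|_]; first lia).
rewrite ifF; last lia. rewrite ifT; last lia. congr Lc; lia.
Qed.

Lemma inp_le S SA x y a : is_suffix_array S SA -> x <= size S -> y <= size S ->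
  input_mem (size S) x y (rank_of SA) (lcp_of S SA) a <= size S.
Proof.
move=> hsa hx hy; rewrite /input_mem.
case: eqP => // a0; case: eqP => // a1; case: eqP => // a2.
case: ifP => ha.
- rewrite /rank_of -(SA_size hsa) index_mem (SA_mem hsa); lia.
- case: ifP => // _. rewrite /lcp_of; case: ifP => // _.
  apply: leq_trans (lcp_size _ _) _; rewrite size_suffix; lia.
Qed.

Theorem lemma5 :
  exists (P : program) (c d e : nat),
    forall (sigma n : nat) (S SA : seq nat) (x y : nat),
      is_string sigma n S ->
      is_suffix_array S SA ->
      1 <= x -> x <= y -> y <= n ->
      exists T,
        T <= c * x /\
        runs_within P (State 0 (input_mem n x y (rank_of SA) (lcp_of S SA)))
          T (d * n.+1) (n.+2 ^ e) /\
        correct_output S x y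
          (memory (run P T (State 0 (input_mem n x y (rank_of SA) (lcp_of S SA))))).
Proof.
exists prog, 107, 40, 4.
move=> sigma n S SA x y [n1 [sn _]] hsa x1 xy yn.
subst n.
set n := size S.
set inp := input_mem n x y (rank_of SA) (lcp_of S SA).
set W := n.+2 ^ 4.
set A := 40 * n.+1.
have hW : n * n + n.*2 + 40 <= W.
  have e4 : W = n.+2 ^ 2 * n.+2 ^ 2 by rewrite /W -expnD.
  have e2 : n.+2 ^ 2 = n * n + 4 * n + 4 by rewrite expnS expn1; nia.
  have h9 : 9 <= n.+2 ^ 2 by rewrite e2; lia.
  have : 9 * n.+2 ^ 2 <= W by rewrite e4 leq_mul.
  rewrite e2; lia.
have hA : 40 * n.+1 <= A by [].
have hxn : x * n <= n * n by apply: leq_mul; lia.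
have i0 : inp 0 = n by [].
have i1 : inp 1 = x by [].
have i2 : inp 2 = y by [].
have hi : forall a, inp a <= n by move=> a; apply: inp_le => //; lia.
have hR : forall j, 1 <= j <= n -> 1 <= inp (j + 1 + 1) <= n.
  move=> j hj; rewrite /inp inp_rank // /rank_of.
  have : index j SA < size SA by rewrite index_mem (SA_mem hsa).
  rewrite (SA_size hsa); lia.
have hL : forall i, 1 <= i <= n ->
    inp (n.+2 + inp (i + 1 + 1)) + (inp (n.+2 + inp (i + 1 + 1) + 1) - inp (n.+2 + inp (i + 1 + 1)))
    = Lval S SA i.
  move=> i hi1; have := hR i hi1; rewrite /inp inp_rank // => hr.
  rewrite -addnA inp_lcp; last lia. rewrite inp_lcp; last lia.
  by rewrite /Lval addn1 maxnE.
have [H [hHW hHs hHl s1]] := @phase1 n x y inp W A ltac:(lia) ltac:(lia) hW hA hxn i0 i1 i2 hi.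
pose Q := Inv S SA y.
have hQb : forall k best bi, k <= x -> Q k best bi -> best <= n /\ bi <= n.
  move=> k best bi kx [bk _ h2]; split; last lia.
  case: (posnP best) => [->//|bp].
  have [b1 _ <- _] := h2 bp.
  have hbi : bi \in SA by rewrite (SA_mem hsa); lia.
  have := Lval_le hsa hbi; rewrite -/n; lia.
have hQs : forall k best bi, k < x -> Q k best bi ->
     let i := k.+1 in
     let l1 := inp (n.+2 + inp (i + 1 + 1)) in
     let l2 := inp (n.+2 + inp (i + 1 + 1) + 1) in
     let L := l1 + (l2 - l1) in
     let c := (0 < i + L - y) * (0 < L - best) in
     Q i (best + (L - best) * c) (bi + (i - bi) * c).
  move=> k best bi kx hq /=.
  rewrite hL; last lia.
  have := Inv_step x1 xy yn hq; rewrite /= !divnn_lt; exact.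
have [best [bi [t1 [t3 [t12 [t13 [hq [[ht1 [ht3 [ht12 ht13]]] s2]]]]]]]] :=
  @loop n x y inp W A (n.*2 + 16) H (inp 14) (inp 15) Q ltac:(lia) ltac:(lia) ltac:(lia) hW hA erefl
    hi hR hHs hHl hHW ltac:(have := hi 14; lia) ltac:(have := hi 15; lia) hQb hQs
    x 1 0 0 (x * n + y) 2 (inp 12) (inp 13) ltac:(lia) ltac:(lia) (@Inv0 S SA x y x1 xy yn)
    ltac:(lia) ltac:(lia) ltac:(have := hi 12; lia) ltac:(have := hi 13; lia).
have [hb hbi] := hQb x best bi (leqnn x) hq.
have [r [s3 sr r0 r1 [r2 rW]]] := @finish n x y W A (n.*2 + 16) H best bi t1 t3 t12 t13 (inp 14) (inp 15)
  ltac:(lia) ltac:(lia) ltac:(lia) hW hA erefl hHW hb hbi ltac:(done) ltac:(done) ltac:(done) ltac:(done)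
  ltac:(have := hi 14; lia) ltac:(have := hi 15; lia).
have s12 := seg_trans s1 s2.
have s := seg_trans s12 s3.
exists (63 + 38 * x + 6); split; first lia.
have hrun : run prog (63 + 38 * x + 6) (State 0 inp) = State 106 (M H r) by case: s.
split.
- apply: seg_runs s _ _ => //= a; exact: M_le.
- rewrite hrun /=.
  apply: (Inv_correct hsa x1 xy yn hq); rewrite M_lt ?sr //.
Qed.
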